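(* Let $T$ be a string of length $n$ and $1\le i\le j<n$. For each $[s,t]\in\mathsf{MUS}(T[i..j+1])$ with $t\ne j+1$, if $[s,t]\notin\mathsf{MUS}(T[i..j])$ then $\#\mathit{occ}_{T[i..j+1]}(\mathit{sqs}_{i,j+1})=2$ and $\mathit{sqs}_{i,j+1}$ is a proper substring of $T[s..t]$.
   Context: $T[a..b]$ denotes the substring of $T$ from position $a$ to $b$. For strings $S,w$, $\#\mathit{occ}_S(w)$ is the number of positions at which $w$ occurs in $S$, with $\#\mathit{occ}_S(\varepsilon)=|S|+1$. A substring $w$ of $S$ is unique in $S$ if $\#\mathit{occ}_S(w)=1$ and repeating if $\#\mathit{occ}_S(w)\ge 2$. For $1\le i\le j\le n$, $\mathsf{MUS}(T[i..j])$ is the set of intervals $[s,t]$ (positions in $T$) with $i\le s\le t\le j$ such that $T[s..t]$ is unique in $T[i..j]$ and every proper substring of $T[s..t]$ (including the empty string) is repeating in $T[i..j]$. $\mathit{sqs}_{i,j}$ is the shortest suffix of $T[i..j]$ that occurs at most twice in $T[i..j]$. *)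

(* Defs.v *)
From mathcomp Require Import all_boot.
Set Implicit Arguments. Unset Strict Implicit. Unset Printing Implicit Defensive.

(* T[a..b], with 1-based positions a, b (empty if b < a). *)
Definition substr (A : eqType) (T : seq A) (a b : nat) : seq A :=
  take (b.+1 - a) (drop a.-1 T).

(* #occ_S(w): number of positions p (0-based, 0 <= p <= |S|-|w|) at which w
   occurs in S; for w = [::] this is |S|+1. *)
Definition occ (A : eqType) (S w : seq A) : nat :=
  count (fun p => take (size w) (drop p S) == w) (iota 0 (size S - size w).+1).

Definition is_MUS (A : eqType) (T : seq A) (i j s t : nat) : Prop :=
  [/\ i <= s, s <= t, t <= j,
      occ (substr T i j) (substr T s t) = 1 &
      forall w : seq A, infix w (substr T s t) -> w != substr T s t ->
        2 <= occ (substr T i j) w].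

(* sqs_{i,j}: the shortest suffix of S = T[i..j] occurring at most twice in S.
   l is the least length l <= |S| such that the suffix of length l occurs at
   most twice (S itself occurs once, so such l exists). *)
Definition sqs_of (A : eqType) (S : seq A) : seq A :=
  let l := find (fun l => occ S (drop (size S - l) S) <= 2) (iota 0 (size S).+1) in
  drop (size S - l) S.

Definition sqs (A : eqType) (T : seq A) (i j : nat) : seq A := sqs_of (substr T i j).

(* Main.v *)
Require Import Defs.
From mathcomp Require Import all_boot zify.

Section Aux.
Variable A : eqType.
Implicit Types S w x y : seq A.

Definition occP S w p := (p + size w <= size S) && (drop p (take (size w + p) S) == w).

Lemma occ_at_size S w p : take (size w) (drop p S) = w -> size w <= size S - p.
Proof. move=> h; have := congr1 size h; rewrite size_take size_drop; case: ifP => hc; lia. Qed.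

Lemma occE S w N : size S < N -> occ S w = count (occP S w) (iota 0 N).
Proof.
move=> hN; rewrite /occ.
set K := (size S - size w).+1.
have KN : K <= N by rewrite /K; lia.
rewrite -(subnKC KN) iotaD count_cat.
have -> : count (occP S w) (iota (0 + K) (N - K)) = 0.
  apply/eqP; rewrite eqn0Ngt -has_count; apply/hasPn => p.
  rewrite mem_iota /occP /K => /andP[h1 _]; apply/negP => /andP[h2 _]; lia.
rewrite addn0; apply: eq_in_count => p; rewrite mem_iota /occP -take_drop /K => /andP[_ hp].
case E: (take (size w) (drop p S) == w); last by rewrite andbF.
rewrite andbT; move/eqP/occ_at_size: E; lia.
Qed.

Lemma occP_take S w p : occP S w p -> take (size w) (drop p S) = w.
Proof. by rewrite /occP take_drop => /andP[_ /eqP]. Qed.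

Lemma occP_infix S x y p a b : y = a ++ x ++ b -> occP S y p -> occP S x (p + size a).
Proof.
move=> hy hP; have hs := hP; move/andP: hs => [hs _].
have ht := @occP_take S y p hP.
rewrite /occP -take_drop.
have -> : drop (p + size a) S = drop (size a) (drop p S) by rewrite drop_drop addnC.
rewrite -(cat_take_drop (size y) (drop p S)) ht hy -catA drop_size_cat //.
rewrite -catA take_size_cat // eqxx andbT.
rewrite hy !size_cat in hs; lia.
Qed.

Definition pos S w := filter (occP S w) (iota 0 (size S).+1).

Lemma occ_pos S w : occ S w = size (pos S w).
Proof. by rewrite size_filter (occE _ _ _ (ltnSn _)). Qed.

Lemma occ_infix S x y : infix x y -> occ S y <= occ S x.
Proof.
move/infixP=> [a [b hy]].
rewrite !occ_pos -(size_map (addn (size a))).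
apply: uniq_leq_size.
  by rewrite map_inj_uniq ?filter_uniq ?iota_uniq //; apply: addnI.
move=> q /mapP[p]; rewrite mem_filter => /andP[hp _] ->.
have h := @occP_infix S x y p a b hy hp.
rewrite mem_filter mem_iota addnC h /=.
move/andP: h => [h _]; lia.
Qed.

Lemma occ_self S : occ S S = 1.
Proof.
rewrite /occ subnn /= drop0 take_size eqxx //.
Qed.

Lemma occ_infix_pos S x : infix x S -> 1 <= occ S x.
Proof. move=> h; by rewrite -(occ_self S) occ_infix. Qed.

Lemma occP_cat S c w p : occP S w p -> occP (S ++ [:: c]) w p.
Proof.
rewrite /occP size_cat /= => /andP[h1 h2]; rewrite takel_cat; last lia.
rewrite h2; apply/andP; split=> //; lia.
Qed.

Lemma occP_cat_new S c w p : occP (S ++ [:: c]) w p -> ~~ occP S w p ->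
  p = size (S ++ [:: c]) - size w /\ w = drop (size (S ++ [:: c]) - size w) (S ++ [:: c]).
Proof.
move=> h hn; move: (h); rewrite /occP => /andP[h1 /eqP h2].
case: (leqP (p + size w) (size S)) => hle.
  case/negP: hn; rewrite /occP hle /=. rewrite takel_cat in h2; last lia. by rewrite h2.
rewrite size_cat /= in h1.
have E : size w + p = size (S ++ [:: c]) by rewrite size_cat /=; lia.
rewrite E take_size in h2.
have Ep : p = size (S ++ [:: c]) - size w by rewrite size_cat /=; lia.
by split=> //; rewrite -Ep h2.
Qed.

Lemma occ_cat_le S c w : occ S w <= occ (S ++ [:: c]) w.
Proof.
rewrite (occE _ _ _ (ltnSn (size (S ++ [:: c])))) (@occE S w (size (S ++ [:: c])).+1); last by rewrite size_cat /=; lia.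
apply: sub_count => p; exact: occP_cat.
Qed.

Lemma occ_cat_ge S c w : occ (S ++ [:: c]) w <= (occ S w).+1.
Proof.
set S' := S ++ [:: c].
rewrite (occE _ _ _ (ltnSn (size S'))) (@occE S w (size S').+1); last by rewrite size_cat /=; lia.
set m := size S' - size w.
apply: (@leq_trans (count (predU (occP S w) (pred1 m)) (iota 0 (size S').+1))).
  apply: sub_count => p hp /=; case E: (occP S w p) => //=.
  by have [-> _] := @occP_cat_new S c w p hp (negbT E).
apply: (@leq_trans (count (occP S w) (iota 0 (size S').+1) + count (pred1 m) (iota 0 (size S').+1))).
  rewrite -count_predUI; exact: leq_addr.
by rewrite -[X in _ <= X]addn1 leq_add2l count_uniq_mem ?iota_uniq // leq_b1.
Qed.

Lemma occ_cat_neq S c w : occ (S ++ [:: c]) w != occ S w ->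
  w = drop (size (S ++ [:: c]) - size w) (S ++ [:: c]).
Proof.
set S' := S ++ [:: c].
move=> hne.
case: (boolP [exists p : 'I_(size S').+1, occP S' w p && ~~ occP S w p]).
  by move/existsP=> [p /andP[h1 h2]]; by have [_ hh] := @occP_cat_new S c w p h1 h2.
rewrite negb_exists => /forallP hall.
case/negP: hne; rewrite eqn_leq occ_cat_le andbT.
rewrite (occE _ _ _ (ltnSn (size S'))) (@occE S w (size S').+1); last by rewrite size_cat /=; lia.
rewrite -!size_filter; apply: uniq_leq_size; first by rewrite filter_uniq ?iota_uniq.
move=> p; rewrite !mem_filter => /andP[h1 h2]; rewrite h2 andbT.
have hp : p < (size S').+1 by move: h2; rewrite mem_iota.
have := hall (Ordinal hp); rewrite /= h1 /= negbK; done.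
Qed.


End Aux.

Lemma infix_size_lt (A : eqType) (w u : seq A) : infix w u -> w != u -> size w < size u.
Proof.
move/infixP=> [a [b ->]] hne; rewrite !size_cat ltnNge; apply/negP => hle.
have ha : size a = 0 by lia.
have hb : size b = 0 by lia.
move/size0nil: ha => ha; move/size0nil: hb => hb; subst.
by rewrite /= cats0 eqxx in hne.
Qed.

Lemma sqs_suffix (A : eqType) (S w : seq A) :
  w = drop (size S - size w) S -> occ S w <= 2 ->
  [/\ occ S (sqs_of S) <= 2, infix (sqs_of S) w & size (sqs_of S) <= size w].
Proof.
move=> hw ho.
have hsz : size w <= size S by rewrite hw size_drop; lia.
set P := (fun l => occ S (drop (size S - l) S) <= 2).
set l := find P (iota 0 (size S).+1).
have hl : l <= size w.
  rewrite leqNgt; apply/negP => hlt.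
  have := before_find 0 hlt; rewrite nth_iota; last lia.
  by rewrite /P add0n -hw ho.
have hP : P l.
  have hw' : size w < size (iota 0 (size S).+1) by rewrite size_iota; lia.
  have hhas : has P (iota 0 (size S).+1).
    apply/hasP; exists (size w); first by rewrite mem_iota; lia.
    by rewrite /P -hw.
  have := nth_find 0 hhas; rewrite -/l nth_iota //; lia.
have E : sqs_of S = drop (size w - l) w.
  by rewrite /sqs_of -/P -/l {2}hw drop_drop; congr drop; lia.
split.
- exact: hP.
- rewrite E; apply/infixP; exists (take (size w - l) w), [::].
  by rewrite cats0 cat_take_drop.
- by rewrite E size_drop leq_subr.
Qed.

Lemma substr_snoc (A : eqType) (T : seq A) i j :
  1 <= i -> i <= j.+1 -> j < size T -> exists c, substr T i j.+1 = substr T i j ++ [:: c].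
Proof.
move=> h1 h2 h3; rewrite /substr.
have -> : j.+2 - i = (j.+1 - i) + 1 by lia.
rewrite takeD.
set r := take 1 _.
have : size r = 1 by rewrite /r size_take !size_drop; case: ifP => hc; lia.
case: r => [|c [|]] //= _; by exists c.
Qed.

Lemma substr_infix (A : eqType) (T : seq A) i j s t :
  1 <= i -> i <= s -> s <= t -> t <= j -> infix (substr T s t) (substr T i j).
Proof.
move=> h1 h2 h3 h4; rewrite /substr.
have -> : drop s.-1 T = drop (s - i) (drop i.-1 T) by rewrite drop_drop; congr drop; lia.
have -> : j.+1 - i = (s - i) + ((t.+1 - s) + (j - t)) by lia.
rewrite takeD takeD; apply/infixP.
by do 2 eexists.
Qed.

Theorem lemma5 (A : eqType) (T : seq A) (n i j s t : nat) :
  size T = n -> 1 <= i -> i <= j -> j < n ->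
  is_MUS T i j.+1 s t -> t != j.+1 -> ~ is_MUS T i j s t ->
  occ (substr T i j.+1) (sqs T i j.+1) = 2 /\
  (infix (sqs T i j.+1) (substr T s t) /\ sqs T i j.+1 != substr T s t).
Proof.
move=> hn h1 hij hjn [his hst htj hu hmin] htne hnot.
have htj' : t <= j by move/eqP: htne; lia.
have [c hc] : exists c, substr T i j.+1 = substr T i j ++ [:: c] by apply: substr_snoc; lia.
rewrite /sqs.
move: hu hmin; rewrite hc.
set S := substr T i j; set u := substr T s t => hu hmin.
have hinf : infix u S by apply: substr_infix.
have huS : occ S u = 1.
  apply/eqP; rewrite eqn_leq occ_infix_pos // andbT -hu; exact: occ_cat_le.
have key : forall w, infix w u -> w != u -> occ S w < 2 ->
  [&& occ (S ++ [:: c]) (sqs_of (S ++ [:: c])) == 2,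
      infix (sqs_of (S ++ [:: c])) u & sqs_of (S ++ [:: c]) != u].
  move=> w hw hne hlt.
  have h2 := hmin w hw hne.
  have h3 := @occ_cat_ge A S c w.
  have hw2 : occ (S ++ [:: c]) w = 2 by lia.
  have hsuf : w = drop (size (S ++ [:: c]) - size w) (S ++ [:: c]).
    by apply: occ_cat_neq; rewrite hw2; apply/eqP; lia.
  have [o2 hi hs] := @sqs_suffix A _ _ hsuf (eq_leq hw2).
  have o2' : 2 <= occ (S ++ [:: c]) (sqs_of (S ++ [:: c])) by rewrite -hw2; exact: occ_infix.
  have hlt' := @infix_size_lt A _ _ hw hne.
  apply/and3P; split.
  - by rewrite eqn_leq o2 o2'.
  - exact: infix_trans hi hw.
  - by apply/eqP => he; move: hlt'; rewrite -he; lia.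
case: (boolP [&& occ (S ++ [:: c]) (sqs_of (S ++ [:: c])) == 2,
      infix (sqs_of (S ++ [:: c])) u & sqs_of (S ++ [:: c]) != u]).
  by move/and3P=> [/eqP -> -> ->].
move=> nb; exfalso; apply: hnot; split=> //.
move=> w hw hne; rewrite leqNgt; apply/negP => hlt.
by case/negP: nb; apply: (key w).
Qed.
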